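(* Let $Q$ be a quadrilateral in $K^2$ in standard form with centroid $(h,k)$ and coefficient $\mu$. (1) A line $\ell$ is a bisector of $Q$ with midpoint $(p,q)\neq(0,0)$ if and only if $q(q-2k)-\mu p(p-2h)=0$ and $\ell$ has equation $qX+pY-2pq=0$. (2) If $(h,k)=(0,0)$, every line through $(0,0)$ is a bisector of $Q$ with midpoint $(0,0)$. (3) If $(h,k)\neq(0,0)$, then the unique bisector of $Q$ whose midpoint is $(0,0)$ is the line $kY+\mu hX=0$.
   Context: $K$ is a field of characteristic $\neq 2$; we work in $K^2$ inside the projective plane. A quadrilateral $Q=ABA'B'$ consists of four distinct lines $A,B,A',B'$ (sides), not all through one point, with adjacent sides ($A,B$; $B,A'$; $A',B'$; $B',A$) not parallel; opposite sides may be parallel. Vertices: $A\cap B$, $B\cap A'$, $A'\cap B'$, $B'\cap A$ (two may coincide if three sides are concurrent). The centroid is the average of the four vertices (equivalently the midpoint of the midpoints of the diagonals). $Q$ is in standard form if $A$ is the line $Y=0$ and $A'$ is the line $X=0$; then $B$ and $B'$ are neither horizontal nor vertical, and the coefficient of $Q$ is $\mu=t_Bt_{B'}$, the product of the slopes of $B$ and $B'$. A line $\ell$ crosses a pair $\{\ell_1,\ell_2\}$ if it is distinct from both and not parallel to both; $\mathrm{mid}_{\{\ell_1,\ell_2\}}(\ell)$ is the midpoint of the points where $\ell$ meets $\ell_1,\ell_2$ (the point at infinity of $\ell$ if one of them is at infinity). $\ell$ bisects $Q$ (is a bisector) if $\mathrm{mid}_{\mathsf P}(\ell)$ is the same for all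 pairs $\mathsf P$ among $\{A,A'\},\{B,B'\}$ that $\ell$ crosses; this common point is the midpoint of the bisector. *)

(* Defs.v *)
From HB Require Import structures.
From mathcomp Require Import all_boot all_algebra.
Set Implicit Arguments. Unset Strict Implicit. Unset Printing Implicit Defensive.
Import GRing.Theory.
Local Open Scope ring_scope.

Section Geo.
Variable K : fieldType.

Definition point := (K * K)%type.

Record line := Line { la : K; lb : K; lc : K; line_nd : (la != 0) || (lb != 0) }.

Definition on_line (l : line) (P : point) : bool :=
  la l * P.1 + lb l * P.2 + lc l == 0.

Definition same_line (l m : line) : Prop := forall P, on_line l P = on_line m P.

(* parallel: same direction (equal lines count as parallel) *)
Definition parallel (l m : line) : bool := la l * lb m == la m * lb l.

Definition slope (l : line) : K := - (la l / lb l).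

Definition midpt (P1 P2 : point) : point :=
  ((P1.1 + P2.1) / 2%:R, (P1.2 + P2.2) / 2%:R).

Definition crosses (l l1 l2 : line) : Prop :=
  ~ same_line l l1 /\ ~ same_line l l2 /\ ~ (parallel l l1 /\ parallel l l2).

(* mid_{l1,l2}(l) = m, where m : option point and [None] stands for the point
   at infinity of l (used when l meets l1 or l2 at infinity) *)
Definition mid_pair (l l1 l2 : line) (m : option point) : Prop :=
  if parallel l l1 || parallel l l2 then m = None
  else exists P1 P2 : point,
    [/\ on_line l P1, on_line l1 P1, on_line l P2, on_line l2 P2
      & m = Some (midpt P1 P2)].

Definition is_quad (A B A' B' : line) : Prop :=
  [/\ ~ same_line A B, ~ same_line A A', ~ same_line A B',
      ~ same_line B A' & ~ same_line B B'] /\ ~ same_line A' B' /\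
  ~ (exists P, [/\ on_line A P, on_line B P, on_line A' P & on_line B' P]) /\
  [/\ ~~ parallel A B, ~~ parallel B A', ~~ parallel A' B'
     & ~~ parallel B' A].

Definition standard_form (A B A' B' : line) : Prop :=
  (forall P : point, on_line A P = (P.2 == 0)) /\
  (forall P : point, on_line A' P = (P.1 == 0)).

Definition centroid (A B A' B' : line) (G : point) : Prop :=
  exists V1 V2 V3 V4 : point,
    [/\ on_line A V1 /\ on_line B V1, on_line B V2 /\ on_line A' V2,
        on_line A' V3 /\ on_line B' V3, on_line B' V4 /\ on_line A V4
      & G = ((V1.1 + V2.1 + V3.1 + V4.1) / 4%:R,
             (V1.2 + V2.2 + V3.2 + V4.2) / 4%:R)].

Definition bisector_mid (A B A' B' l : line) (m : option point) : Prop :=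
  [/\ crosses l A A' \/ crosses l B B',
      crosses l A A' -> mid_pair l A A' m
    & crosses l B B' -> mid_pair l B B' m].

End Geo.

(* Main.v *)
Require Import Defs.
From mathcomp Require Import all_boot all_algebra ring lra.
From Stdlib Require Import Classical.
Import GRing.Theory.
Local Open Scope ring_scope.
Set Implicit Arguments. Unset Strict Implicit. Unset Printing Implicit Defensive.

Ltac sc := repeat (apply/andP; split); assumption.
Ltac fs0 := field; sc.

Section Aux.
Variable K : fieldType.
Implicit Types (l m : line K) (P : point K).

Definition det l m := la l * lb m - la m * lb l.
Definition ix l m : point K :=
  ((lb l * lc m - lb m * lc l) / det l m, (la m * lc l - la l * lc m) / det l m).

Lemma parallelE l m : parallel l m = (det l m == 0).
Proof. by rewrite /parallel /det subr_eq0. Qed.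

Lemma ix_on l m : det l m != 0 -> on_line l (ix l m) /\ on_line m (ix l m).
Proof. rewrite /on_line /ix /det /= => hd; split; apply/eqP; fs0. Qed.

Lemma ix_uniq l m P : det l m != 0 -> on_line l P -> on_line m P -> P = ix l m.
Proof.
case: P => x y; rewrite /on_line /ix /det /= => hd /eqP e1 /eqP e2.
have e3 : (la l * lb m - la m * lb l) * x - (lb l * lc m - lb m * lc l) = 0.
  have -> : (la l * lb m - la m * lb l) * x - (lb l * lc m - lb m * lc l)
     = lb m * (la l * x + lb l * y + lc l) - lb l * (la m * x + lb m * y + lc m) by ring.
  by rewrite e1 e2; ring.
have e4 : (la l * lb m - la m * lb l) * y - (la m * lc l - la l * lc m) = 0.
  have -> : (la l * lb m - la m * lb l) * y - (la m * lc l - la l * lc m)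
     = la l * (la m * x + lb m * y + lc m) - la m * (la l * x + lb l * y + lc l) by ring.
  by rewrite e1 e2; ring.
move/eqP: e3; rewrite subr_eq0 => /eqP <-.
move/eqP: e4; rewrite subr_eq0 => /eqP <-.
by congr pair; field.
Qed.

Lemma mid_pairE l l1 l2 M : mid_pair l l1 l2 (Some M) <->
  [/\ det l l1 != 0, det l l2 != 0 & M = midpt (ix l l1) (ix l l2)].
Proof.
rewrite /mid_pair !parallelE.
case: (det l l1 =P 0) => [e|h1] /=; first by split=> // -[].
case: (det l l2 =P 0) => [e|h2] /=; first by split=> // -[].
have h1' : det l l1 != 0 by apply/eqP.
have h2' : det l l2 != 0 by apply/eqP.
split.
  case=> P1 [P2 [o1 o1' o2 o2' [->]]].
  by rewrite (ix_uniq h1' o1 o1') (ix_uniq h2' o2 o2').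
case=> _ _ ->; exists (ix l l1), (ix l l2).
by case: (ix_on h1') => ? ?; case: (ix_on h2') => ? ?; split.
Qed.

Lemma same_pts l a c d : (forall P, on_line l P = (a * P.1 + c * P.2 + d == 0)) ->
  (a != 0) || (c != 0) ->
  exists2 r, r != 0 & [/\ a = r * la l, c = r * lb l & d = r * lc l].
Proof.
move=> H hac.
case: (boolP (la l == 0)) => ha0.
  have hb0 : lb l != 0 by move: (line_nd l); rewrite (eqP ha0) eqxx.
  have e1 : a * 0 + c * (- lc l / lb l) + d == 0.
    by move: (H (0, (- lc l / lb l))); rewrite /on_line /= => <-; apply/eqP; fs0.
  have e2 : a * 1 + c * (- (lc l + la l) / lb l) + d == 0.
    by move: (H (1, (- (lc l + la l) / lb l))); rewrite /on_line /= => <-; apply/eqP; fs0.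
  move/eqP: e1 => e1; move/eqP: e2 => e2.
  have ed : d = c / lb l * lc l.
    apply/eqP; rewrite -subr_eq0.
    have -> : d - c / lb l * lc l = a * 0 + c * (- lc l / lb l) + d by fs0.
    by rewrite e1.
  have ea : a = c / lb l * la l.
    apply/eqP; rewrite -subr_eq0.
    have -> : a - c / lb l * la l = (a * 1 + c * (- (lc l + la l) / lb l) + d) - (a * 0 + c * (- lc l / lb l) + d) by fs0.
    by rewrite e1 e2 subrr.
  exists (c / lb l).
    apply: contraTneq hac => hc.
    have c0 : c = 0 by move/eqP: hc; rewrite mulf_eq0 invr_eq0 (negbTE hb0) orbF => /eqP.
    by rewrite ea hc mul0r c0 eqxx.
  by split=> //; fs0.
have e1 : a * (- lc l / la l) + c * 0 + d == 0.
  by move: (H ((- lc l / la l), 0)); rewrite /on_line /= => <-; apply/eqP; fs0.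
have e2 : a * (- (lc l + lb l) / la l) + c * 1 + d == 0.
  by move: (H ((- (lc l + lb l) / la l), 1)); rewrite /on_line /= => <-; apply/eqP; fs0.
move/eqP: e1 => e1; move/eqP: e2 => e2.
have ed : d = a / la l * lc l.
  apply/eqP; rewrite -subr_eq0.
  have -> : d - a / la l * lc l = a * (- lc l / la l) + c * 0 + d by fs0.
  by rewrite e1.
have ec : c = a / la l * lb l.
  apply/eqP; rewrite -subr_eq0.
  have -> : c - a / la l * lb l = (a * (- (lc l + lb l) / la l) + c * 1 + d) - (a * (- lc l / la l) + c * 0 + d) by fs0.
  by rewrite e1 e2 subrr.
exists (a / la l).
  apply: contraTneq hac => ha.
  have a0 : a = 0 by move/eqP: ha; rewrite mulf_eq0 invr_eq0 (negbTE ha0) orbF => /eqP.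
  by rewrite ec ha mul0r a0 eqxx.
by split=> //; fs0.
Qed.

Lemma scale_pts l r a c d : r != 0 -> a = r * la l -> c = r * lb l -> d = r * lc l ->
  forall P, on_line l P = (a * P.1 + c * P.2 + d == 0).
Proof.
move=> hr -> -> -> P; rewrite /on_line.
have -> : r * la l * P.1 + r * lb l * P.2 + r * lc l = r * (la l * P.1 + lb l * P.2 + lc l) by ring.
by rewrite mulf_eq0 (negbTE hr).
Qed.

Lemma same_lineE l m : same_line l m <->
  exists2 r, r != 0 & [/\ la m = r * la l, lb m = r * lb l & lc m = r * lc l].
Proof.
split=> [H|[r hr [e1 e2 e3]] P].
  by apply: same_pts; [exact: H | case: m {H}].
by rewrite (scale_pts hr e1 e2 e3).
Qed.

End Aux.

Lemma h4 (K : fieldType) : (2%:R : K) != 0 -> (4%:R : K) != 0.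
Proof. by move=> hK; rewrite (_ : 4%:R = 2%:R * 2%:R) ?mulf_neq0 // -natrM. Qed.
Ltac nz := match goal with
 | |- is_true (_ && _) => apply/andP; split; nz
 | |- is_true (- _ != 0) => rewrite oppr_eq0; nz
 | |- is_true (_ * _ != 0) => apply: mulf_neq0; nz
 | |- is_true (_^-1 != 0) => rewrite invr_eq0; nz
 | _ => first [assumption | apply: h4; assumption ]
 end.
Ltac fs := field; nz.
Lemma prop2 (K : fieldType) (a c x y : K) : (a != 0) || (c != 0) -> (x != 0) || (y != 0) ->
  x * c = y * a -> exists2 r, r != 0 & x = r * a /\ y = r * c.
Proof.
move=> hac hxy e.
case: (eqVneq c 0) => hc.
  rewrite hc eqxx orbF in hac.
  have y0 : y = 0.
    by move: e; rewrite hc mulr0 => /esym/eqP; rewrite mulf_eq0 (negbTE hac) orbF => /eqP.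
  rewrite y0 eqxx orbF in hxy.
  exists (x / a); first by apply: mulf_neq0; rewrite ?invr_eq0.
  by rewrite y0 hc mulr0 divfK.
have hy : y != 0.
  apply: contraTneq hxy => y0; move: e; rewrite y0 mul0r => /eqP.
  by rewrite mulf_eq0 (negbTE hc) orbF => /eqP ->; rewrite eqxx.
exists (y / c); first by apply: mulf_neq0; rewrite ?invr_eq0.
split; last by rewrite divfK.
apply: (mulIf hc); rewrite e; field; exact: hc.
Qed.

Section Main.
Variable K : fieldType.
Hypothesis hK : (2%:R : K) != 0.
Implicit Types (l m : line K).
Variables A B A' B' : line K.
Hypotheses (eA1 : la A = 0) (eA3 : lc A = 0) (nA : lb A != 0)
  (eA'2 : lb A' = 0) (eA'3 : lc A' = 0) (nA' : la A' != 0)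
  (n1 : la B != 0) (n2 : lb B != 0) (n1' : la B' != 0) (n2' : lb B' != 0)
  (nc : ~ (lc B = 0 /\ lc B' = 0)).

Definition hh := - (lc B / la B + lc B' / la B') / 4%:R.
Definition kk := - (lc B / lb B + lc B' / lb B') / 4%:R.
Definition mu0 := slope B * slope B'.
Definition Sl (l : line K) := lc B * det l B' + lc B' * det l B.
Definition cond (p q : K) := q * (q - 2%:R * kk) - mu0 * p * (p - 2%:R * hh).


Lemma mu0_neq0 : mu0 != 0.
Proof. by rewrite /mu0 /slope mulf_neq0 // oppr_eq0 mulf_neq0 // invr_eq0. Qed.

Lemma lb_nd (l : line K) : la l = 0 -> lb l != 0.
Proof. by move=> h; move: (line_nd l); rewrite h eqxx. Qed.
Lemma la_nd (l : line K) : lb l = 0 -> la l != 0.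
Proof. by move=> h; move: (line_nd l); rewrite h eqxx orbF. Qed.

Lemma mul0_r (r x : K) : r != 0 -> 0 = r * x -> x = 0.
Proof. by move=> hr /esym/eqP; rewrite mulf_eq0 (negbTE hr) => /eqP. Qed.

Lemma sameA l : same_line l A <-> la l = 0 /\ lc l = 0.
Proof.
rewrite same_lineE; split.
  case=> r hr [e1 _ e3]; rewrite eA1 in e1; rewrite eA3 in e3.
  by split; apply: (mul0_r hr).
case=> h1 h3; have hb := lb_nd h1.
by exists (lb A / lb l); [rewrite mulf_neq0 ?invr_eq0 | split; rewrite ?eA1 ?eA3 ?h1 ?h3 ?mulr0 //; fs].
Qed.

Lemma sameA' l : same_line l A' <-> lb l = 0 /\ lc l = 0.
Proof.
rewrite same_lineE; split.
  case=> r hr [_ e2 e3]; rewrite eA'2 in e2; rewrite eA'3 in e3.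
  by split; apply: (mul0_r hr).
case=> h1 h3; have hb := la_nd h1.
by exists (la A' / la l); [rewrite mulf_neq0 ?invr_eq0 | split; rewrite ?eA'2 ?eA'3 ?h1 ?h3 ?mulr0 //; fs].
Qed.

Lemma crossAA l : crosses l A A' <-> ~ (la l = 0 /\ lc l = 0) /\ ~ (lb l = 0 /\ lc l = 0).
Proof.
rewrite /crosses; split.
  by case=> h1 [h2 _]; split=> h; [apply: h1; apply/sameA | apply: h2; apply/sameA'].
case=> h1 h2; split; first by move/sameA.
split; first by move/sameA'.
rewrite /parallel eA1 eA'2 mul0r mulr0 => -[/eqP p1 /eqP p2].
have := line_nd l.
move/eqP: p1; rewrite mulf_eq0 (negbTE nA) orbF => /eqP ->.
by move/esym/eqP: p2; rewrite mulf_eq0 (negbTE nA') /= => /eqP ->; rewrite eqxx.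
Qed.

Lemma ncrossAA l : ~ crosses l A A' -> (la l = 0 /\ lc l = 0) \/ (lb l = 0 /\ lc l = 0).
Proof.
move=> h; apply: NNPP => h'; apply: h; apply/crossAA.
by split=> H; apply: h'; [left | right].
Qed.

Lemma ncrossBB l : ~ crosses l B B' ->
  [\/ same_line l B, same_line l B' | det l B = 0 /\ det l B' = 0].
Proof.
move=> h; apply: NNPP => h'; apply: h; rewrite /crosses !parallelE.
split; first by move=> H; apply: h'; apply: Or31.
split; first by move=> H; apply: h'; apply: Or32.
by case=> /eqP H1 /eqP H2; apply: h'; apply: Or33.
Qed.

Lemma midAA l p q : mid_pair l A A' (Some (p, q)) <->
  [/\ la l != 0, lb l != 0, p = - lc l / (2%:R * la l) & q = - lc l / (2%:R * lb l)].
Proof.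
rewrite mid_pairE /ix /det /midpt /= eA1 eA3 eA'2 eA'3 !(mul0r, mulr0, subr0, sub0r).
split.
  case=> d1 d2 [-> ->].
  have ha : la l != 0 by apply: contraNneq d1 => ->; rewrite mul0r.
  have hb : lb l != 0 by apply: contraNneq d2 => ->; rewrite mulr0 oppr0.
  by split=> //; fs.
case=> ha hb -> ->; split.
- by rewrite mulf_neq0.
- by rewrite oppr_eq0 mulf_neq0.
- by congr pair; fs.
Qed.

Lemma P1_condBB l r : r != 0 -> la l != 0 -> lb l != 0 ->
  lc l = - (2%:R * r * la l * lb l) ->
  mid_pair l B B' (Some (r * lb l, r * la l)) -> cond (r * lb l) (r * la l) = 0.
Proof.
move=> hr ha hc ed /mid_pairE [d1 d2 [e1 e2]].
have d1' := d1; have d2' := d2; rewrite /det in d1' d2'.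
have -> : cond (r * lb l) (r * la l) = r * det l B * det l B' / (lb l * lb B * lb B') *
   (((ix l B).1 + (ix l B').1) / 2%:R - r * lb l).
  rewrite /cond /hh /kk /mu0 /slope /ix /det /= ed; fs.
by rewrite -e1 subrr mulr0.
Qed.

Lemma solve_eq (x y F L R : K) : x - y = F * (L - R) -> L = R -> x = y.
Proof. by move=> h e; apply/eqP; rewrite -subr_eq0 h e subrr mulr0. Qed.

Lemma P1_notBB l r : r != 0 -> la l != 0 -> lb l != 0 ->
  lc l = - (2%:R * r * la l * lb l) ->
  ~ crosses l B B' -> cond (r * lb l) (r * la l) = 0.
Proof.
move=> hr ha hc ed /ncrossBB [].
- case/same_lineE=> r' hr' [e1 e2 e3].
  rewrite /cond /hh /kk /mu0 /slope e1 e2 e3 ed; fs.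
- case/same_lineE=> r' hr' [e1 e2 e3].
  rewrite /cond /hh /kk /mu0 /slope e1 e2 e3 ed; fs.
- rewrite /det => -[D1 D2].
  have ea1 : la B = la l * lb B / lb l.
    by apply: (solve_eq (F := - (lb l)^-1) _ D1); fs.
  have ea2 : la B' = la l * lb B' / lb l.
    by apply: (solve_eq (F := - (lb l)^-1) _ D2); fs.
  have n1a := n1; have n1a' := n1'.
  rewrite ea1 in n1a; rewrite ea2 in n1a'.
  rewrite /cond /hh /kk /mu0 /slope ea1 ea2; fs.
Qed.

Lemma P1_bwdBB l r : r != 0 -> la l != 0 -> lb l != 0 ->
  lc l = - (2%:R * r * la l * lb l) -> cond (r * lb l) (r * la l) = 0 ->
  crosses l B B' -> mid_pair l B B' (Some (r * lb l, r * la l)).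
Proof.
move=> hr ha hc ed Hc [nsB [nsB' npar]].
rewrite !parallelE in npar.
have d1 : det l B != 0.
  apply/eqP => D1; move: (D1); rewrite /det => D1'.
  have ea1 : la B = la l * lb B / lb l.
    by apply: (solve_eq (F := - (lb l)^-1) _ D1'); fs.
  have : cond (r * lb l) (r * la l) =
     (r * la l + lc B / (2%:R * lb B)) * (r * la l - la B' * r * lb l / lb B').
    rewrite /cond /hh /kk /mu0 /slope ea1; fs.
  rewrite Hc => /esym/eqP; rewrite mulf_eq0 => /orP[] /eqP f.
  - apply: nsB; apply/same_lineE; exists (lb B / lb l); first by nz.
    have ec1 : lc B = - (2%:R * lb B * r * la l).
      by apply: (solve_eq (F := 2%:R * lb B) _ f); fs.
    by split; rewrite ?ea1 ?ec1 ?ed; fs.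
  - apply: npar; split; first exact/eqP.
    apply/eqP; rewrite /det.
    have -> : la l * lb B' - la B' * lb l = lb B' / r * (r * la l - la B' * r * lb l / lb B') by fs.
    by rewrite f mulr0.
have d2 : det l B' != 0.
  apply/eqP => D2; move: (D2); rewrite /det => D2'.
  have ea2 : la B' = la l * lb B' / lb l.
    by apply: (solve_eq (F := - (lb l)^-1) _ D2'); fs.
  have : cond (r * lb l) (r * la l) =
     (r * la l + lc B' / (2%:R * lb B')) * (r * la l - la B * r * lb l / lb B).
    rewrite /cond /hh /kk /mu0 /slope ea2; fs.
  rewrite Hc => /esym/eqP; rewrite mulf_eq0 => /orP[] /eqP f.
  - apply: nsB'; apply/same_lineE; exists (lb B' / lb l); first by nz.
    have ec2 : lc B' = - (2%:R * lb B' * r * la l).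
      by apply: (solve_eq (F := 2%:R * lb B') _ f); fs.
    by split; rewrite ?ea2 ?ec2 ?ed; fs.
  - apply: npar; split; last exact/eqP.
    apply/eqP; rewrite /det.
    have -> : la l * lb B - la B * lb l = lb B / r * (r * la l - la B * r * lb l / lb B) by fs.
    by rewrite f mulr0.
have d1' := d1; have d2' := d2; rewrite /det in d1' d2'.
apply/mid_pairE; split=> //; rewrite /midpt; congr pair.
- apply: (solve_eq (F := - (lb l * lb B * lb B') / (r * det l B * det l B')) _ Hc).
  rewrite /cond /hh /kk /mu0 /slope /ix /det /= ed; fs.
- apply: (solve_eq (F := (la l * lb B * lb B') / (r * det l B * det l B')) _ Hc).
  rewrite /cond /hh /kk /mu0 /slope /ix /det /= ed; fs.
Qed.

Lemma ID l : mu0 * hh * lb l - kk * la l = Sl l / (4%:R * lb B * lb B').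
Proof. rewrite /mu0 /hh /kk /slope /Sl /det; fs. Qed.

Lemma par_same l m : la m != 0 -> lc l = 0 -> lc m = 0 -> det l m = 0 -> same_line l m.
Proof.
move=> ham hd hdm; rewrite /det => D.
have ha : la l != 0.
  apply/eqP => ha0; have hb := lb_nd ha0.
  by move: D; rewrite ha0 mul0r sub0r => /eqP; rewrite oppr_eq0 mulf_eq0 (negbTE ham) (negbTE hb).
apply/same_lineE; exists (la m / la l); first by nz.
split; rewrite ?hd ?hdm ?mulr0 //; first by fs.
by apply: (solve_eq (F := (la l)^-1) _ D); fs.
Qed.

Lemma disj l : lc l = 0 -> crosses l A A' \/ crosses l B B'.
Proof.
move=> hd.
case: (eqVneq (la l) 0) => ha.
  have hb := lb_nd ha; right; split.
    by case/same_lineE=> r hr [e1 _ _]; move: n1; rewrite e1 ha mulr0 eqxx.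
  split.
    by case/same_lineE=> r hr [e1 _ _]; move: n1'; rewrite e1 ha mulr0 eqxx.
  rewrite !parallelE /det ha mul0r sub0r oppr_eq0 mulf_eq0 (negbTE n1) (negbTE hb).
  by case.
case: (eqVneq (lb l) 0) => hb.
  right; split.
    by case/same_lineE=> r hr [_ e2 _]; move: n2; rewrite e2 hb mulr0 eqxx.
  split.
    by case/same_lineE=> r hr [_ e2 _]; move: n2'; rewrite e2 hb mulr0 eqxx.
  rewrite !parallelE /det hb mulr0 subr0 mulf_eq0 (negbTE n2) (negbTE ha).
  by case.
left; apply/crossAA; split; case=> h1 h2.
  by move: ha; rewrite h1 eqxx.
by move: hb; rewrite h1 eqxx.
Qed.

Lemma bis0 l : lc l = 0 -> Sl l = 0 -> bisector_mid A B A' B' l (Some (0, 0)).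
Proof.
move=> hd hS; split.
- exact: disj.
- case/crossAA=> h1 h2.
  have ha : la l != 0 by apply/eqP => h; apply: h1.
  have hb : lb l != 0 by apply/eqP => h; apply: h2.
  by apply/midAA; split=> //; rewrite hd oppr0 mul0r.
- case=> nsB [nsB' npar]; rewrite !parallelE in npar.
  have d1 : det l B != 0.
    apply/eqP => D1.
    have D2 : det l B' != 0 by apply/eqP => D2; apply: npar; rewrite D1 D2 eqxx.
    move: hS; rewrite /Sl D1 mulr0 addr0 => /eqP; rewrite mulf_eq0 (negbTE D2) orbF => /eqP c1.
    by apply: nsB; apply: par_same.
  have d2 : det l B' != 0.
    apply/eqP => D2.
    have D1 : det l B != 0 by apply/eqP => D1; apply: npar; rewrite D1 D2 eqxx.
    move: hS; rewrite /Sl D2 mulr0 add0r => /eqP; rewrite mulf_eq0 (negbTE D1) orbF => /eqP c1.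
    by apply: nsB'; apply: par_same.
  have d1' := d1; have d2' := d2; rewrite /det in d1' d2'.
  apply/mid_pairE; split=> //; rewrite /midpt; congr pair.
  + apply: esym; apply: (solve_eq (F := lb l / (2%:R * det l B * det l B')) _ hS).
    rewrite /Sl /ix /det /= hd; fs.
  + apply: esym; apply: (solve_eq (F := - la l / (2%:R * det l B * det l B')) _ hS).
    rewrite /Sl /ix /det /= hd; fs.
Qed.

Lemma part1 l p q : (p, q) != (0, 0) ->
  (bisector_mid A B A' B' l (Some (p, q)) <->
   q * (q - 2%:R * kk) - mu0 * p * (p - 2%:R * hh) = 0 /\
   (forall P : point K, on_line l P = (q * P.1 + p * P.2 - 2%:R * p * q == 0))).
Proof.
move=> hpq; split.
- case=> Hor HAA HBB.
  case: (classic (crosses l A A')) => cA.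
  + have [ha hc ep eq] := (midAA l p q).1 (HAA cA).
    have hd : lc l != 0.
      by apply: contra hpq => /eqP hd0; rewrite ep eq hd0 oppr0 !mul0r.
    set r := - lc l / (2%:R * la l * lb l).
    have hr : r != 0 by rewrite /r; nz.
    have ep' : p = r * lb l by rewrite ep /r; fs.
    have eq' : q = r * la l by rewrite eq /r; fs.
    have ed : lc l = - (2%:R * r * la l * lb l) by rewrite /r; fs.
    clear ep eq; subst p q.
    split.
      case: (classic (crosses l B B')) => cB.
        exact: (P1_condBB hr ha hc ed (HBB cB)).
      exact: (P1_notBB hr ha hc ed cB).
    apply: (scale_pts hr) => //.
    by rewrite ed; ring.
  + have cB : crosses l B B' by case: Hor.
    have [d1 d2 e] := (mid_pairE l B B' (p, q)).1 (HBB cB).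
    have d1' := d1; have d2' := d2; rewrite /det in d1' d2'.
    case: (ncrossAA cA) => [[ha hd]|[hb hd]].
    * have hb := lb_nd ha.
      move: e; rewrite /midpt /ix /det /= ha hd => -[ep eq].
      have q0 : q = 0 by rewrite eq; fs.
      have ep2 : p = 2%:R * hh by rewrite ep /hh; fs.
      have hp : p != 0 by apply: contra hpq => /eqP p0; rewrite p0 q0.
      split; first by rewrite q0 ep2; ring.
      apply: (scale_pts (r := p / lb l)); first by nz.
      - by rewrite ha mulr0 q0.
      - by fs.
      - by rewrite hd q0; ring.
    * have ha := la_nd hb.
      move: e; rewrite /midpt /ix /det /= hb hd => -[ep eq].
      have p0 : p = 0 by rewrite ep; fs.
      have eq2 : q = 2%:R * kk by rewrite eq /kk; fs.
      have hq : q != 0 by apply: contra hpq => /eqP q0; rewrite p0 q0.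
      split; first by rewrite p0 eq2; ring.
      apply: (scale_pts (r := q / la l)); first by nz.
      - by fs.
      - by rewrite hb mulr0 p0.
      - by rewrite hd p0; ring.
- case=> Hc Hl.
  have hqp : (q != 0) || (p != 0) by move: hpq; rewrite xpair_eqE negb_and orbC.
  have [r hr [eq ep ed]] := same_pts Hl hqp.
  subst q p.
  have ed' : lc l = - (2%:R * r * la l * lb l) by apply: (mulfI hr); rewrite -ed; ring.
  clear ed.
  case: (eqVneq (lb l) 0) => hb.
    have ha := la_nd hb.
    have hd : lc l = 0 by rewrite ed' hb; ring.
    have : (r * la l) * (r * la l - 2%:R * kk) = 0 by rewrite -Hc hb; ring.
    move/eqP; rewrite mulf_eq0 (negbTE (mulf_neq0 hr ha)) /= subr_eq0 => /eqP e2.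
    split.
    + exact: disj.
    + by case/crossAA => _ []; split.
    + move=> cB; apply/mid_pairE; split.
      * by rewrite /det hb !mulr0 subr0; nz.
      * by rewrite /det hb !mulr0 subr0; nz.
      have d1 : la l * lb B - la B * 0 != 0 by rewrite mulr0 subr0; nz.
      have d2 : la l * lb B' - la B' * 0 != 0 by rewrite mulr0 subr0; nz.
      rewrite /midpt /ix /det /= hb hd; congr pair; first by fs.
      by rewrite e2 /kk; fs.
  case: (eqVneq (la l) 0) => ha.
    have hd : lc l = 0 by rewrite ed' ha; ring.
    have hb' := lb_nd ha.
    have : mu0 * ((r * lb l) * (r * lb l - 2%:R * hh)) = 0 by rewrite -oppr0 -Hc ha; ring.
    move/eqP; rewrite mulf_eq0 (negbTE mu0_neq0) /= mulf_eq0 (negbTE (mulf_neq0 hr hb')) /= subr_eq0 => /eqP e2.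
    split.
    + exact: disj.
    + by case/crossAA => [[]].
    + move=> cB; apply/mid_pairE; split.
      * by rewrite /det ha !mul0r sub0r; nz.
      * by rewrite /det ha !mul0r sub0r; nz.
      have d1 : 0 * lb B - la B * lb l != 0 by rewrite mul0r sub0r; nz.
      have d2 : 0 * lb B' - la B' * lb l != 0 by rewrite mul0r sub0r; nz.
      rewrite /midpt /ix /det /= ha hd; congr pair; last by fs.
      by rewrite e2 /hh; fs.
  split.
  + left; apply/crossAA; split; case=> h _; [move: ha | move: hb]; by rewrite h eqxx.
  + by move=> _; apply/midAA; split=> //; rewrite ed'; fs.
  + exact: P1_bwdBB.
Qed.

Lemma S_of l : Sl l = 4%:R * lb B * lb B' * (mu0 * hh * lb l - kk * la l).
Proof. by rewrite ID; fs. Qed.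

Lemma part2 : (hh, kk) = (0, 0) ->
  forall l, on_line l (0, 0) -> bisector_mid A B A' B' l (Some (0, 0)).
Proof.
case=> hh0 kk0 l Hl.
have hd : lc l = 0 by move: Hl; rewrite /on_line /= !mulr0 !add0r => /eqP.
apply: bis0 hd _.
by rewrite S_of hh0 kk0; ring.
Qed.

Lemma part3 : (hh, kk) != (0, 0) -> forall l,
  bisector_mid A B A' B' l (Some (0, 0)) <->
  (forall P : point K, on_line l P = (kk * P.2 + mu0 * hh * P.1 == 0)).
Proof.
move=> hne l.
have hx : (mu0 * hh != 0) || (kk != 0).
  move: hne; rewrite xpair_eqE negb_and => /orP[h|->]; last by rewrite orbT.
  by rewrite mulf_neq0 // mu0_neq0.
split.
- case=> Hor HAA HBB.
  have hd : lc l = 0.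
    case: (classic (crosses l A A')) => cA.
      have [ha _ ep _] := (midAA l 0 0).1 (HAA cA).
      by apply: (solve_eq (F := 2%:R * la l) _ ep); fs.
    by case: (ncrossAA cA) => -[].
  have hS : Sl l = 0.
    case: (classic (crosses l B B')) => cB.
      have [d1 d2 e] := (mid_pairE l B B' (0, 0)).1 (HBB cB).
      have d1' := d1; have d2' := d2; rewrite /det in d1' d2'.
      move: e; rewrite /midpt => -[e1 e2].
      case: (eqVneq (lb l) 0) => hb.
        have ha := la_nd hb.
        apply: (solve_eq (F := 2%:R * det l B * det l B' / la l) _ e2).
        rewrite /Sl /ix /det /= hd; fs.
      apply: (solve_eq (F := - (2%:R * det l B * det l B') / lb l) _ e1).
      rewrite /Sl /ix /det /= hd; fs.
    case: (ncrossBB cB) => [/same_lineE [r' hr' [e1 e2 e3]] | /same_lineE [r' hr' [e1 e2 e3]] | [D1 D2]].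
    + by rewrite /Sl /det e1 e2 e3 hd; ring.
    + by rewrite /Sl /det e1 e2 e3 hd; ring.
    + by rewrite /Sl D1 D2 !mulr0 addr0.
  have e : mu0 * hh * lb l = kk * la l by apply/eqP; rewrite -subr_eq0 ID hS mul0r.
  have [r hr [e1 e2]] := prop2 (line_nd l) hx e.
  move=> P; rewrite (scale_pts (d := 0) hr e1 e2 _ P); last by rewrite hd mulr0.
  by rewrite addr0 addrC.
- move=> Hl.
  have Hl' : forall P, on_line l P = (mu0 * hh * P.1 + kk * P.2 + 0 == 0).
    by move=> P; rewrite Hl addr0 addrC.
  have [r hr [e1 e2 e3]] := same_pts Hl' hx.
  have hd : lc l = 0 := mul0_r hr e3.
  apply: bis0 hd _.
  by rewrite S_of e1 e2; ring.
Qed.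

Lemma main_sec :
  [/\ (forall (l : line K) (p q : K), (p, q) != (0, 0) ->
         (bisector_mid A B A' B' l (Some (p, q)) <->
          q * (q - 2%:R * kk) - mu0 * p * (p - 2%:R * hh) = 0 /\
          (forall P : point K,
             on_line l P = (q * P.1 + p * P.2 - 2%:R * p * q == 0)))),
      ((hh, kk) = (0, 0) ->
         forall l : line K, on_line l (0, 0) ->
           bisector_mid A B A' B' l (Some (0, 0)))
    & ((hh, kk) != (0, 0) ->
         forall l : line K,
           bisector_mid A B A' B' l (Some (0, 0)) <->
           (forall P : point K, on_line l P = (kk * P.2 + mu0 * hh * P.1 == 0)))].
Proof. split; [exact: part1 | exact: part2 | exact: part3]. Qed.

End Main.

Theorem proposition4p4 (K : fieldType) (hK : (2%:R : K) != 0)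
  (A B A' B' : line K) (h k mu : K) :
  is_quad A B A' B' -> standard_form A B A' B' ->
  centroid A B A' B' (h, k) ->
  mu = slope B * slope B' ->
  [/\ (* (1) *)
      (forall (l : line K) (p q : K), (p, q) != (0, 0) ->
         (bisector_mid A B A' B' l (Some (p, q)) <->
          q * (q - 2%:R * k) - mu * p * (p - 2%:R * h) = 0 /\
          (forall P : point K,
             on_line l P = (q * P.1 + p * P.2 - 2%:R * p * q == 0)))),
      (* (2) *)
      ((h, k) = (0, 0) ->
         forall l : line K, on_line l (0, 0) ->
           bisector_mid A B A' B' l (Some (0, 0)))
    & (* (3) *)
      ((h, k) != (0, 0) ->
         forall l : line K,
           bisector_mid A B A' B' l (Some (0, 0)) <->
           (forall P : point K, on_line l P = (k * P.2 + mu * h * P.1 == 0)))].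
Proof.
move=> [_ [_ [_ [pAB pBA' pA'B' pB'A]]]] [sA sA'] [V1 [V2 [V3 [V4 [[o1 o1'] [o2 o2'] [o3 o3'] [o4 o4'] hG]]]]] hmu.
have sA2 : forall P : point K, on_line A P = (0 * P.1 + 1 * P.2 + 0 == 0).
  by move=> P; rewrite sA mul0r mul1r add0r addr0.
have [rA hrA [a1 a2 a3]] := same_pts sA2 (introT orP (or_intror (oner_neq0 K))).
have eA1 : la A = 0 := mul0_r hrA a1.
have eA3 : lc A = 0 := mul0_r hrA a3.
have nA : lb A != 0 by apply/eqP => h0; move: a2; rewrite h0 mulr0 => /eqP; rewrite oner_eq0.
have sA'2 : forall P : point K, on_line A' P = (1 * P.1 + 0 * P.2 + 0 == 0).
  by move=> P; rewrite sA' mul0r mul1r addr0 addr0.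
have [rA' hrA' [b1 b2 b3]] := same_pts sA'2 (introT orP (or_introl (oner_neq0 K))).
have eA'2 : lb A' = 0 := mul0_r hrA' b2.
have eA'3 : lc A' = 0 := mul0_r hrA' b3.
have nA' : la A' != 0 by apply/eqP => h0; move: b1; rewrite h0 mulr0 => /eqP; rewrite oner_eq0.
have n1 : la B != 0.
  by move: pAB; rewrite /parallel eA1 mul0r eq_sym mulf_eq0 negb_or => /andP[].
have n2 : lb B != 0.
  by move: pBA'; rewrite /parallel eA'2 mulr0 eq_sym mulf_eq0 negb_or => /andP[].
have n2' : lb B' != 0.
  by move: pA'B'; rewrite /parallel eA'2 mulr0 mulf_eq0 negb_or => /andP[].
have n1' : la B' != 0.
  by move: pB'A; rewrite /parallel eA1 mul0r mulf_eq0 negb_or => /andP[].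
case: V1 o1 o1' hG => x1 y1 o1 o1' hG.
case: V2 o2 o2' hG => x2 y2 o2 o2' hG.
case: V3 o3 o3' hG => x3 y3 o3 o3' hG.
case: V4 o4 o4' hG => x4 y4 o4 o4' hG.
rewrite sA /= in o1; rewrite sA' /= in o2'; rewrite sA' /= in o3; rewrite sA /= in o4'.
move/eqP: o1 => ey1; move/eqP: o2' => ex2; move/eqP: o3 => ex3; move/eqP: o4' => ey4.
rewrite /on_line /= in o1' o2 o3' o4.
move/eqP: o1' => o1'; move/eqP: o2 => o2; move/eqP: o3' => o3'; move/eqP: o4 => o4.
have ex1 : x1 = - lc B / la B.
  by apply: (solve_eq (F := (la B)^-1) _ o1'); rewrite ey1; field.
have ey2 : y2 = - lc B / lb B.
  by apply: (solve_eq (F := (lb B)^-1) _ o2); rewrite ex2; field.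
have ey3 : y3 = - lc B' / lb B'.
  by apply: (solve_eq (F := (lb B')^-1) _ o3'); rewrite ex3; field.
have ex4 : x4 = - lc B' / la B'.
  by apply: (solve_eq (F := (la B')^-1) _ o4); rewrite ey4; field.
have h4' := h4 hK.
case: hG => eh ek.
have eh' : h = hh B B' by rewrite eh ex1 ex2 ex3 ex4 /hh; field; rewrite h4' n1 n1'.
have ek' : k = kk B B' by rewrite ek ey1 ey2 ey3 ey4 /kk; field; rewrite h4' n2 n2'.
clear eh ek; subst h k mu.
exact: (main_sec hK eA1 eA3 nA eA'2 eA'3 nA' n1 n2 n1' n2').
Qed.
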